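(* There exists a beyond quantum state $W \in \mathcal{W}(\mathbb{C}^2\otimes\mathbb{C}^2)$ whose classical-input classical-output correlations are classically simulable; that is, there exist a probability space $(\Lambda,\omega)$ and, for every finite-outcome POVM $A=\{A_i\}_i$ on $\mathbb{C}^2$ and every finite-outcome POVM $B=\{B_j\}_j$ on $\mathbb{C}^2$, measurable response functions $\lambda\mapsto P(A_i|A,\lambda)\in[0,1]$ and $\lambda\mapsto P(B_j|B,\lambda)\in[0,1]$ with $\sum_i P(A_i|A,\lambda)=1=\sum_j P(B_j|B,\lambda)$ for all $\lambda$, such that for all such POVMs $A,B$ and all outcomes $i,j$, $$\operatorname{Tr}\big[W(A_i\otimes B_j)\big]=\int_\Lambda P(A_i|A,\lambda)\,P(B_j|B,\lambda)\,d\omega(\lambda).$$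
   Context: For finite-dimensional Hilbert spaces $\mathcal{H}_{A_1},\dots,\mathcal{H}_{A_n}$, a POPT (positive over all pure tensors) state is a Hermitian operator $W$ on $\bigotimes_i\mathcal{H}_{A_i}$ with $\operatorname{Tr}W=1$ and $\operatorname{Tr}[W(P_1\otimes\cdots\otimes P_n)]\ge 0$ for all positive semidefinite operators $P_i$ on $\mathcal{H}_{A_i}$; the set of POPT states is denoted $\mathcal{W}(\bigotimes_i\mathcal{H}_{A_i})$. A beyond quantum state (BQS) is a POPT state that is not positive semidefinite, i.e. an element of $\mathcal{W}(\bigotimes_i\mathcal{H}_{A_i})\setminus\mathcal{D}(\bigotimes_i\mathcal{H}_{A_i})$, where $\mathcal{D}$ denotes the set of density operators (positive semidefinite, unit trace). A POVM on $\mathcal{H}$ is a finite family of positive semidefinite operators summing to the identity. *)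

(* Defs.v *)
From HB Require Import structures.
From mathcomp Require Import all_boot all_order all_algebra.
From mathcomp Require Import all_classical all_reals all_analysis.
From mathcomp Require Import complex mxtens.

Set Implicit Arguments.
Unset Strict Implicit.
Unset Printing Implicit Defensive.

Import Order.TTheory GRing.Theory Num.Theory.
Local Open Scope ring_scope.

Section Defs.
Variable R : realType.
Local Notation C := (complex R).

Definition adjmx m n (A : 'M[C]_(m, n)) : 'M[C]_(n, m) :=
  \matrix_(i, j) Num.conj (A j i).

(* positive semidefinite: <v, A v> >= 0 for all v (in the order of C,
   which means real and nonnegative) *)
Definition psd n (A : 'M[C]_n) : Prop :=
  forall v : 'cV[C]_n, 0 <= (adjmx v *m A *m v) 0 0.

Definition hermitian n (A : 'M[C]_n) : Prop := adjmx A = A.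

Definition density n (W : 'M[C]_n) : Prop := psd W /\ \tr W = 1.

Definition popt m n (W : 'M[C]_(m * n)) : Prop :=
  [/\ hermitian W, \tr W = 1 &
      forall (P1 : 'M[C]_m) (P2 : 'M[C]_n), psd P1 -> psd P2 ->
        0 <= \tr (W *m (P1 *t P2))].

Definition bqs m n (W : 'M[C]_(m * n)) : Prop := popt W /\ ~ density W.

Definition povm n k (A : 'I_k -> 'M[C]_n) : Prop :=
  (forall i, psd (A i)) /\ \sum_(i < k) A i = 1%:M.

Definition response d (T : measurableType d) n :=
  forall k : nat, ('I_k -> 'M[C]_n) -> T -> 'I_k -> R.

Definition valid_response d (T : measurableType d) n (p : response T n) :
  Prop :=
  forall k (A : 'I_k -> 'M[C]_n), povm A ->
    [/\ forall i, measurable_fun setT (fun l => p k A l i),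
        forall l i, 0 <= p k A l i <= 1 &
        forall l, \sum_(i < k) p k A l i = 1].
End Defs.

(* Main.v *)
Require Import Defs.
From HB Require Import structures.
From mathcomp Require Import all_boot all_order all_algebra.
From mathcomp Require Import all_classical all_reals all_analysis.
From mathcomp Require Import complex mxtens.
From mathcomp Require Import ring lra.
Import Order.TTheory GRing.Theory Num.Theory.
Local Open Scope ring_scope.
Local Open Scope complex_scope.
Set Implicit Arguments. Unset Strict Implicit.

Section S.
Variable R : realType.
Local Notation C := (complex R).
Local Notation Re := complex.Re.
Local Notation Im := complex.Im.

Lemma ReD (x y : C) : Re (x + y) = Re x + Re y. Proof. by case: x => a b; case: y => c d. Qed.
Lemma ImD (x y : C) : Im (x + y) = Im x + Im y. Proof. by case: x => a b; case: y => c d. Qed.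
Lemma ReN (x : C) : Re (- x) = - Re x. Proof. by case: x => a b. Qed.
Lemma ImN (x : C) : Im (- x) = - Im x. Proof. by case: x => a b. Qed.
Lemma ReM (x y : C) : Re (x * y) = Re x * Re y - Im x * Im y. Proof. by case: x => a b; case: y => c d. Qed.
Lemma ImM (x y : C) : Im (x * y) = Re x * Im y + Im x * Re y. Proof. by case: x => a b; case: y => c d. Qed.
Lemma Recj (x : C) : Re (Num.conj x) = Re x. Proof. by case: x. Qed.
Lemma Imcj (x : C) : Im (Num.conj x) = - Im x. Proof. by case: x. Qed.
Lemma ReR (r : R) : Re (r%:C) = r. Proof. by []. Qed.
Lemma ImR (r : R) : Im (r%:C) = 0. Proof. by []. Qed.
Lemma Re0 : Re (0 : C) = 0. Proof. by []. Qed.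
Lemma Im0 : Im (0 : C) = 0. Proof. by []. Qed.
Lemma Re1 : Re (1 : C) = 1. Proof. by []. Qed.
Lemma Im1 : Im (1 : C) = 0. Proof. by []. Qed.
Lemma Re_sum I (r : seq I) (P : pred I) (F : I -> C) :
  Re (\sum_(i <- r | P i) F i) = \sum_(i <- r | P i) Re (F i).
Proof. by apply: (big_morph _ ReD Re0). Qed.
Lemma Im_sum I (r : seq I) (P : pred I) (F : I -> C) :
  Im (\sum_(i <- r | P i) F i) = \sum_(i <- r | P i) Im (F i).
Proof. by apply: (big_morph _ ImD Im0). Qed.
Lemma ge0C (x : C) : (0 <= x) = (Im x == 0) && (0 <= Re x).
Proof. by rewrite lecE. Qed.

Lemma ord2_1 : lift ord0 (ord0 : 'I_1) = (1 : 'I_2). Proof. exact: val_inj. Qed.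
Lemma sum2 (V : nmodType) (F : 'I_2 -> V) : \sum_(i < 2) F i = F 0 + F 1.
Proof. by rewrite big_ord_recl big_ord1 ord2_1. Qed.

Definition v2 (c0 c1 : C) : 'cV[C]_2 := \col_(i < 2) (if i == 0 then c0 else c1).

Lemma qform (M : 'M[C]_2) c0 c1 :
  (adjmx (v2 c0 c1) *m M *m (v2 c0 c1)) 0 0 =
  Num.conj c0 * (M 0 0 * c0 + M 0 1 * c1) + Num.conj c1 * (M 1 0 * c0 + M 1 1 * c1).
Proof.
rewrite !mxE !sum2 !mxE !sum2 !mxE /=.
ring.
Qed.

Lemma psd_real (M : 'M[C]_2) (x y : R) : psd M ->
  Im (M 0 0) * x ^+ 2 + (Im (M 0 1) + Im (M 1 0)) * x * y + Im (M 1 1) * y ^+ 2 = 0 /\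
  0 <= Re (M 0 0) * x ^+ 2 + (Re (M 0 1) + Re (M 1 0)) * x * y + Re (M 1 1) * y ^+ 2.
Proof.
move=> /(_ (v2 x%:C y%:C)); rewrite qform ge0C => /andP[/eqP HI HR].
move: HI HR; rewrite !(ImD, ImM, ReD, ReM, Recj, Imcj, ReR, ImR) => HI HR.
split; first by apply: etrans HI; ring.
nra.
Qed.

Lemma psd2 (M : 'M[C]_2) : psd M ->
  [/\ Im (M 0 0) = 0, Im (M 1 1) = 0, Im (M 0 1) + Im (M 1 0) = 0 &
   forall x y : R, 0 <= Re (M 0 0) * x ^+ 2 + (Re (M 0 1) + Re (M 1 0)) * x * y + Re (M 1 1) * y ^+ 2].
Proof.
move=> H.
have [h1 _] := psd_real 1 0 H.
have [h2 _] := psd_real 0 1 H.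
have [h3 _] := psd_real 1 1 H.
split => //; try nra.
by move=> x y; case: (psd_real x y H).
Qed.

Definition e0 (M : 'M[C]_2) := (Re (M 0 0) + Re (M 1 1)) / 2.
Definition e1 (M : 'M[C]_2) := (Re (M 0 1) + Re (M 1 0)) / 2.
Definition e3 (M : 'M[C]_2) := (Re (M 0 0) - Re (M 1 1)) / 2.

Lemma bloch (M : 'M[C]_2) : psd M -> 0 <= e0 M /\ e1 M ^+ 2 + e3 M ^+ 2 <= e0 M ^+ 2.
Proof.
move=> /psd2 [_ _ _ H].
rewrite /e0 /e1 /e3.
set a := Re (M 0 0) in H *; set b := Re (M 1 1) in H *; set p := Re (M 0 1) + Re (M 1 0) in H *.
have h1 := H 1 0; have h2 := H 0 1; have h3 := H p (-2 * a); have h4 := H (-2 * b) p.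
have h5 := H 1 1; have h6 := H 1 (-1).
rewrite !expr1n !expr0n /= in h1 h2 h3 h4 h5 h6.
have ha : 0 <= a by lra.
have hb : 0 <= b by lra.
split; first lra.
have key : (a + b) * (4 * a * b - p ^+ 2) >= 0.
  apply: le_trans (addr_ge0 h3 h4) _.
  by rewrite le_eqVlt; apply/orP; left; apply/eqP; ring.
have [ab0|ab0] := eqVneq (a + b) 0.
  have a0 : a = 0 by lra.
  have b0 : b = 0 by lra.
  have p0 : p = 0.
    move: h5 h6; rewrite a0 b0; lra.
  rewrite a0 b0 p0; lra.
have abp : 0 < a + b by rewrite lt0r ab0; lra.
have : 0 <= 4 * a * b - p ^+ 2.
  by rewrite -(pmulr_rge0 _ abp).
nra.
Qed.

Lemma sum_tens (V : nmodType) (F : 'I_(2 * 2) -> V) :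
  \sum_k F k = \sum_(i < 2) \sum_(j < 2) F (mxtens_index (i, j)).
Proof.
rewrite pair_big /=.
rewrite (reindex (@mxtens_index 2 2)) /=; last first.
  by exists (@mxtens_unindex 2 2) => x _; [exact: mxtens_indexK | exact: mxtens_unindexK].
by apply: eq_bigr => -[i j].
Qed.

Definition tau : R := 33 / 64.
Definition dl (i j : 'I_2) : R := (i == j)%:R.
Definition Xm (i j : 'I_2) : R := (i != j)%:R.
Definition Zm (i j : 'I_2) : R := (i == j)%:R * (if i == 0 then 1 else -1).
Definition wfR (u v : 'I_2 * 'I_2) : R :=
  (1 / 4) * (dl u.1 v.1 * dl u.2 v.2 + tau * (Xm u.1 v.1 * Xm u.2 v.2 + Zm u.1 v.1 * Zm u.2 v.2)).
Definition W : 'M[C]_(2 * 2) :=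
  \matrix_(k, l) (wfR (@mxtens_unindex 2 2 k) (@mxtens_unindex 2 2 l))%:C.

Lemma WE i1 i2 j1 j2 : W (mxtens_index (i1, i2)) (mxtens_index (j1, j2)) = (wfR (i1, i2) (j1, j2))%:C.
Proof. by rewrite mxE !mxtens_indexK. Qed.

Lemma trW (M N : 'M[C]_2) :
  Im (M 0 0) = 0 -> Im (M 1 1) = 0 -> Im (M 0 1) + Im (M 1 0) = 0 ->
  Im (N 0 0) = 0 -> Im (N 1 1) = 0 -> Im (N 0 1) + Im (N 1 0) = 0 ->
  \tr (W *m (M *t N)) = (e0 M * e0 N + tau * (e1 M * e1 N + e3 M * e3 N))%:C.
Proof.
move=> m00 m11 m01 n00 n11 n01.
rewrite /mxtrace sum_tens.
under eq_bigr do under eq_bigr do rewrite mxE sum_tens.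
rewrite !sum2 !WE !tensmxE.
rewrite /wfR /dl /Xm /Zm /=.
apply/eqP; rewrite eq_complex; apply/andP; split; apply/eqP.
  rewrite !(ReD, ReM, ImD, ImM, ReR, ImR, ReN, ImN) /e0 /e1 /e3.
  have m10 : Im (M 1 0) = - Im (M 0 1) by lra.
  have n10 : Im (N 1 0) = - Im (N 0 1) by lra.
  rewrite m00 m11 m10 n00 n11 n10 /tau.
  by field.
rewrite !(ReD, ReM, ImD, ImM, ReR, ImR, ReN, ImN).
have m10 : Im (M 1 0) = - Im (M 0 1) by lra.
have n10 : Im (N 1 0) = - Im (N 0 1) by lra.
rewrite m00 m11 m10 n00 n11 n10 /tau.
by field.
Qed.

Lemma cjR (r : R) : Num.conj (r%:C) = r%:C.
Proof. by apply/eqP; rewrite eq_complex /= oppr0 !eqxx. Qed.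

Lemma Zm_sym i j : Zm i j = Zm j i.
Proof. by rewrite /Zm eq_sym; case: eqVneq => [->|]; rewrite ?mul0r. Qed.

Lemma wfR_sym u v : wfR u v = wfR v u.
Proof. by rewrite /wfR /dl /Xm (eq_sym u.1) (eq_sym u.2) (Zm_sym u.1) (Zm_sym u.2). Qed.

Lemma W_herm : Defs.hermitian W.
Proof.
apply/matrixP => k l; rewrite !mxE cjR wfR_sym //.
Qed.

Lemma W_tr : \tr W = 1.
Proof.
rewrite /mxtrace sum_tens !sum2 !WE /wfR /dl /Xm /Zm /=.
apply/eqP; rewrite eq_complex; apply/andP; split; apply/eqP;
  rewrite !(ReD, ImD, ReR, ImR) /tau /=; by field.
Qed.

Lemma cs (a0 a1 a3 b0 b1 b3 : R) : 0 <= a0 -> a1 ^+ 2 + a3 ^+ 2 <= a0 ^+ 2 ->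
  0 <= b0 -> b1 ^+ 2 + b3 ^+ 2 <= b0 ^+ 2 ->
  - (a0 * b0) <= a1 * b1 + a3 * b3 <= a0 * b0.
Proof.
move=> ha0 ha hb0 hb.
have id : (a1 * b1 + a3 * b3) ^+ 2 + (a1 * b3 - a3 * b1) ^+ 2 = (a1 ^+ 2 + a3 ^+ 2) * (b1 ^+ 2 + b3 ^+ 2) by ring.
have h1 : (a1 * b1 + a3 * b3) ^+ 2 <= (a0 * b0) ^+ 2.
  have h2 : (a1 ^+ 2 + a3 ^+ 2) * (b1 ^+ 2 + b3 ^+ 2) <= a0 ^+ 2 * b0 ^+ 2.
    apply: ler_pM => //; by rewrite addr_ge0 // sqr_ge0.
  rewrite exprMn; have := sqr_ge0 (a1 * b3 - a3 * b1); lra.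
have hp : 0 <= a0 * b0 by rewrite mulr_ge0.
apply/andP; split; nra.
Qed.

Lemma W_popt : popt W.
Proof.
split; [exact: W_herm | exact: W_tr |].
move=> P1 P2 h1 h2.
have [i1 i2 i3 _] := psd2 h1.
have [j1 j2 j3 _] := psd2 h2.
rewrite trW // ge0C /= eqxx /=.
have [a0 a] := bloch h1.
have [b0 b] := bloch h2.
have := cs a0 a b0 b; rewrite /tau => /andP[c1 c2].
have hp : 0 <= e0 P1 * e0 P2 by rewrite mulr_ge0.
nra.
Qed.

Definition vs : 'cV[C]_(2 * 2) :=
  \col_k (let u := @mxtens_unindex 2 2 k in
          (((u.1 == 0) && (u.2 == 1))%:R - ((u.1 == 1) && (u.2 == 0))%:R : R)%:C).

Lemma vsE i j : vs (mxtens_index (i, j)) 0 =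
  (((i == 0) && (j == 1))%:R - ((i == 1) && (j == 0))%:R : R)%:C.
Proof. by rewrite mxE mxtens_indexK. Qed.

Lemma W_notpsd : ~ psd W.
Proof.
move=> /(_ vs).
rewrite mxE sum_tens.
under eq_bigr do under eq_bigr do rewrite mxE sum_tens.
under eq_bigr do under eq_bigr do under eq_bigr do under eq_bigr do rewrite mxE.
rewrite !sum2 !WE !vsE !cjR /wfR /dl /Xm /Zm /=.
rewrite ge0C => /andP[_].
rewrite !(ReD, ReM, ImD, ImM, ReR, ImR) /tau /=.
lra.
Qed.

Lemma W_bqs : bqs W.
Proof. split; [exact: W_popt | by case=> /W_notpsd]. Qed.

Definition px (n : nat) : R := match n with
  | 0 => 1 | 1 => -1 | 2 => 0 | 3 => 0 | 4 => 3/5 | 5 => 3/5 | 6 => -(3/5) | 7 => -(3/5)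
  | 8 => 4/5 | 9 => 4/5 | 10 => -(4/5) | 11 => -(4/5) | _ => 1 end.
Definition pz (n : nat) : R := match n with
  | 0 => 0 | 1 => 0 | 2 => 1 | 3 => -1 | 4 => 4/5 | 5 => -(4/5) | 6 => 4/5 | 7 => -(4/5)
  | 8 => 3/5 | 9 => -(3/5) | 10 => 3/5 | 11 => -(3/5) | _ => 0 end.
Definition wt (n : nat) : R := if (n < 4)%N then 527/4608 else if (n < 12)%N then 625/9216 else 0.

Definition E (f : nat -> R) : R := \sum_(0 <= n < 12) wt n * f n.

Definition F (s : R) : R := 13/16 + 9/8 * s + 3/8 * s ^+ 2 - 1/8 * s ^+ 3.

Lemma unit_p n : px n ^+ 2 + pz n ^+ 2 = 1.
Proof.
do 12 (case: n => [|n]; first by rewrite /px /pz; field).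
by rewrite /px /pz; field.
Qed.

Lemma E1 : E (fun=> 1) = 1.
Proof. rewrite /E unlock /= /wt /=. by field. Qed.

Lemma Epx : E px = 0.
Proof. rewrite /E unlock /= /wt /px /=. by field. Qed.

Lemma Epz : E pz = 0.
Proof. rewrite /E unlock /= /wt /pz /=. by field. Qed.

Lemma mom0 (a b n1 n3 : R) :
  E (fun l => a * F (n1 * px l + n3 * pz l) + b * F (- (n1 * px l + n3 * pz l))) =
  (a + b) * (13/16 + 3/16 * (n1 ^+ 2 + n3 ^+ 2)).
Proof. rewrite /E unlock /= /wt /px /pz /F /=. by field. Qed.

Lemma momx (a b n1 n3 : R) :
  E (fun l => (a * F (n1 * px l + n3 * pz l) + b * F (- (n1 * px l + n3 * pz l))) * px l) =
  (a - b) * (9/16 * n1 - 3/64 * (n1 ^+ 2 + n3 ^+ 2) * n1).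
Proof. rewrite /E unlock /= /wt /px /pz /F /=. by field. Qed.

Lemma momz (a b n1 n3 : R) :
  E (fun l => (a * F (n1 * px l + n3 * pz l) + b * F (- (n1 * px l + n3 * pz l))) * pz l) =
  (a - b) * (9/16 * n3 - 3/64 * (n1 ^+ 2 + n3 ^+ 2) * n3).
Proof. rewrite /E unlock /= /wt /px /pz /F /=. by field. Qed.

Lemma E_lin (a b : R) f g : E (fun l => a * f l + b * g l) = a * E f + b * E g.
Proof. by rewrite /E !mulr_sumr -big_split /=; apply: eq_bigr => n _; ring. Qed.

Lemma E_ext f g : (forall l, f l = g l) -> E f = E g.
Proof. by move=> h; rewrite /E; apply: eq_bigr => n _; rewrite h. Qed.

Lemma E_sum k (f : 'I_k -> nat -> R) :
  E (fun l => \sum_(j < k) f j l) = \sum_(j < k) E (f j).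
Proof.
rewrite /E; under eq_bigr do rewrite mulr_sumr.
by rewrite exchange_big.
Qed.

Lemma E_q f (b0 b1 b3 : R) :
  E (fun l => f l * (b0 + b1 * px l + b3 * pz l)) =
  b0 * E f + b1 * E (fun l => f l * px l) + b3 * E (fun l => f l * pz l).
Proof.
rewrite /E !mulr_sumr -!big_split /=; apply: eq_bigr => n _; ring.
Qed.

Lemma F_lo s : -1 <= s <= 1 -> 3/16 <= F s.
Proof.
move=> /andP[h1 h2]; rewrite /F.
have : 0 <= (1 + s) ^+ 2 * (5 - s).
  by apply: mulr_ge0; [exact: sqr_ge0 | lra].
have -> : (1 + s) ^+ 2 * (5 - s) = 8 * (13/16 + 9/8 * s + 3/8 * s ^+ 2 - 1/8 * s ^+ 3 - 3/16) by field.
lra.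
Qed.

Lemma F_hi s : -1 <= s <= 1 -> F s <= 19/16 + s.
Proof.
move=> /andP[h1 h2]; rewrite /F.
have : 0 <= (1 - s) * (1 + s) * (3 - s).
  by apply: mulr_ge0; [apply: mulr_ge0|]; lra.
have -> : (1 - s) * (1 + s) * (3 - s) = 8 * (19/16 + s - (13/16 + 9/8 * s + 3/8 * s ^+ 2 - 1/8 * s ^+ 3)) by field.
lra.
Qed.


Definition rr (M : 'M[C]_2) : R := Num.sqrt (e1 M ^+ 2 + e3 M ^+ 2).
Definition nn1 M := if rr M == 0 then 1 else e1 M / rr M.
Definition nn3 M := if rr M == 0 then 0 else e3 M / rr M.
Definition sv M l := nn1 M * px l + nn3 M * pz l.
Definition Phi M l := (e0 M + rr M) / 2 * F (sv M l) + (e0 M - rr M) / 2 * F (- sv M l).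

Lemma rr_ge0 M : 0 <= rr M. Proof. exact: sqrtr_ge0. Qed.
Lemma rr_sq M : rr M ^+ 2 = e1 M ^+ 2 + e3 M ^+ 2.
Proof. by rewrite sqr_sqrtr // addr_ge0 // sqr_ge0. Qed.

Lemma nn_unit M : nn1 M ^+ 2 + nn3 M ^+ 2 = 1.
Proof.
rewrite /nn1 /nn3; case: eqP => r0; first by rewrite expr1n expr0n addr0.
move: (rr_sq M) r0; move: (rr M) (e1 M) (e3 M) => r a b hr r0.
have r2 : r ^+ 2 != 0 by rewrite expf_neq0 //; apply/eqP.
by rewrite !expr_div_n -mulrDl -hr divff.
Qed.

Lemma rr_n M : rr M * nn1 M = e1 M /\ rr M * nn3 M = e3 M.
Proof.
rewrite /nn1 /nn3; case: eqP => r0.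
  have := rr_sq M; rewrite r0 expr0n /= => h.
  have h1 : e1 M = 0 by nra.
  have h3 : e3 M = 0 by nra.
  by rewrite h1 h3 !mul0r.
by split; rewrite mulrC divfK //; apply/eqP.
Qed.

Lemma sv_bound M l : -1 <= sv M l <= 1.
Proof.
have hu := nn_unit M; have hp := unit_p l.
have h : sv M l ^+ 2 <= 1.
  have id : sv M l ^+ 2 + (nn1 M * pz l - nn3 M * px l) ^+ 2 =
    (nn1 M ^+ 2 + nn3 M ^+ 2) * (px l ^+ 2 + pz l ^+ 2) by rewrite /sv; ring.
  rewrite hu hp mul1r in id.
  have := sqr_ge0 (nn1 M * pz l - nn3 M * px l); lra.
apply/andP; split; nra.
Qed.

Lemma rr_le M : psd M -> rr M <= e0 M.
Proof.
move=> h; have [h0 hb] := bloch h.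
have := rr_sq M; have := rr_ge0 M; nra.
Qed.

Lemma Phi_lo M l : psd M -> 3/16 * e0 M <= Phi M l.
Proof.
move=> h; have hr := rr_le h; have hr0 := rr_ge0 M.
have hs := sv_bound M l.
have f1 := F_lo hs.
have f2 : 3/16 <= F (- sv M l) by apply: F_lo; move: hs => /andP[? ?]; apply/andP; split; lra.
rewrite /Phi.
have ha : 0 <= (e0 M + rr M) / 2 by lra.
have hb : 0 <= (e0 M - rr M) / 2 by lra.
have := ler_wpM2l ha f1; have := ler_wpM2l hb f2; lra.
Qed.

Lemma Phi_hi M l : psd M -> Phi M l <= 19/16 * e0 M + e1 M * px l + e3 M * pz l.
Proof.
move=> h; have hr := rr_le h; have hr0 := rr_ge0 M.
have hs := sv_bound M l.
have f1 := F_hi hs.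
have f2 : F (- sv M l) <= 19/16 + - sv M l by apply: F_hi; move: hs => /andP[? ?]; apply/andP; split; lra.
have [n1 n3] := rr_n M.
have e : e1 M * px l + e3 M * pz l = rr M * sv M l by rewrite -n1 -n3 /sv; ring.
rewrite -addrA e /Phi.
have ha : 0 <= (e0 M + rr M) / 2 by lra.
have hb : 0 <= (e0 M - rr M) / 2 by lra.
have := ler_wpM2l ha f1; have := ler_wpM2l hb f2; lra.
Qed.

Lemma Phi_E M : E (Phi M) = e0 M.
Proof.
rewrite (@E_ext _ (fun l => (e0 M + rr M) / 2 * F (nn1 M * px l + nn3 M * pz l) +
   (e0 M - rr M) / 2 * F (- (nn1 M * px l + nn3 M * pz l)))) //.
by rewrite mom0 nn_unit; field.
Qed.

Lemma Phi_Ex M : E (fun l => Phi M l * px l) = tau * e1 M.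
Proof.
rewrite (@E_ext _ (fun l => ((e0 M + rr M) / 2 * F (nn1 M * px l + nn3 M * pz l) +
   (e0 M - rr M) / 2 * F (- (nn1 M * px l + nn3 M * pz l))) * px l)) //.
rewrite momx nn_unit; have [<- _] := rr_n M; rewrite /tau; by field.
Qed.

Lemma Phi_Ez M : E (fun l => Phi M l * pz l) = tau * e3 M.
Proof.
rewrite (@E_ext _ (fun l => ((e0 M + rr M) / 2 * F (nn1 M * px l + nn3 M * pz l) +
   (e0 M - rr M) / 2 * F (- (nn1 M * px l + nn3 M * pz l))) * pz l)) //.
rewrite momz nn_unit; have [_ <-] := rr_n M; rewrite /tau; by field.
Qed.


Definition pA k (A : 'I_k -> 'M[C]_2) (l : nat) (i : 'I_k) : R :=
  Phi (A i) l - e0 (A i) * (\sum_(j < k) Phi (A j) l - 1).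
Definition pB k (B : 'I_k -> 'M[C]_2) (l : nat) (j : 'I_k) : R :=
  e0 (B j) + e1 (B j) * px l + e3 (B j) * pz l.

Lemma povm_sums k (A : 'I_k -> 'M[C]_2) : povm A ->
  [/\ \sum_i e0 (A i) = 1, \sum_i e1 (A i) = 0 & \sum_i e3 (A i) = 0].
Proof.
move=> [_ hs].
have h a b : \sum_i complex.Re (A i a b) = ((a == b)%:R : R).
  rewrite -Re_sum -summxE hs mxE.
  by case: (a == b).
rewrite /e0 /e1 /e3 -!mulr_suml !big_split /= !sumrN /= !h /=.
split; by field.
Qed.

Lemma pA_sum k (A : 'I_k -> 'M[C]_2) l : povm A -> \sum_i pA A l i = 1.
Proof.
move=> hA; have [s0 _ _] := povm_sums hA.
rewrite /pA sumrB -mulr_suml s0 mul1r; ring.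
Qed.

Lemma pA_ge0 k (A : 'I_k -> 'M[C]_2) l i : povm A -> 0 <= pA A l i.
Proof.
move=> hA; have [s0 s1 s3] := povm_sums hA.
have hp j : psd (A j) by case: hA.
have hS : \sum_(j < k) Phi (A j) l <= 19/16.
  apply: le_trans (ler_sum _ (fun j _ => Phi_hi l (hp j))) _.
  have -> : \sum_(j < k) (19/16 * e0 (A j) + e1 (A j) * px l + e3 (A j) * pz l) =
    19/16 * (\sum_j e0 (A j)) + (\sum_j e1 (A j)) * px l + (\sum_j e3 (A j)) * pz l.
    by rewrite !big_split /= mulr_sumr !mulr_suml.
  rewrite s0 s1 s3; lra.
have ha := (bloch (hp i)).1.
have hl := Phi_lo l (hp i).
rewrite /pA.
have : e0 (A i) * (\sum_(j < k) Phi (A j) l - 1) <= e0 (A i) * (3/16).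
  by apply: ler_wpM2l => //; lra.
lra.
Qed.

Lemma pA_le1 k (A : 'I_k -> 'M[C]_2) l i : povm A -> pA A l i <= 1.
Proof.
move=> hA; have := pA_sum l hA; rewrite (bigD1 i) //= => h.
have : 0 <= \sum_(j < k | j != i) pA A l j by apply: sumr_ge0 => j _; exact: pA_ge0.
lra.
Qed.

Lemma pB_sum k (B : 'I_k -> 'M[C]_2) l : povm B -> \sum_j pB B l j = 1.
Proof.
move=> hB; have [s0 s1 s3] := povm_sums hB.
have -> : \sum_j pB B l j =
    (\sum_j e0 (B j)) + (\sum_j e1 (B j)) * px l + (\sum_j e3 (B j)) * pz l.
  by rewrite /pB !big_split /= !mulr_suml.
by rewrite s0 s1 s3 !mul0r !addr0.
Qed.

Lemma pB_ge0 k (B : 'I_k -> 'M[C]_2) l j : povm B -> 0 <= pB B l j.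
Proof.
move=> hB; have hp : psd (B j) by case: hB.
have [h0 hb] := bloch hp.
have hu : px l ^+ 2 + pz l ^+ 2 <= 1 ^+ 2 by rewrite unit_p expr1n.
have := cs h0 hb ler01 hu; rewrite /pB mulr1 => /andP[c1 c2]; lra.
Qed.

Lemma pB_le1 k (B : 'I_k -> 'M[C]_2) l j : povm B -> pB B l j <= 1.
Proof.
move=> hB; have := pB_sum l hB; rewrite (bigD1 j) //= => h.
have : 0 <= \sum_(i < k | i != j) pB B l i by apply: sumr_ge0 => i _; exact: pB_ge0.
lra.
Qed.

Lemma model k (A : 'I_k -> 'M[C]_2) i (b0 b1 b3 : R) : povm A ->
  E (fun l => pA A l i * (b0 + b1 * px l + b3 * pz l)) =
  e0 (A i) * b0 + tau * (e1 (A i) * b1 + e3 (A i) * b3).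
Proof.
move=> hA; have [s0 s1 s3] := povm_sums hA.
rewrite E_q.
have hE : E (pA A ^~ i) = e0 (A i).
  rewrite /pA (@E_ext _ (fun l => 1 * Phi (A i) l + (- e0 (A i)) * (\sum_(j < k) Phi (A j) l - 1))); last by move=> l; ring.
  rewrite E_lin Phi_E.
  rewrite (@E_ext _ (fun l => 1 * (\sum_(j < k) Phi (A j) l) + (-1) * 1)); last by move=> l; ring.
  rewrite E_lin E_sum E1.
  under eq_bigr do rewrite Phi_E.
  rewrite s0; ring.
have hEx : E (fun l => pA A l i * px l) = tau * e1 (A i).
  rewrite /pA (@E_ext _ (fun l => 1 * (Phi (A i) l * px l) + (- e0 (A i)) * (\sum_(j < k) (Phi (A j) l * px l) - px l))); last first.
    by move=> l; rewrite /pA -mulr_suml; ring.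
  rewrite E_lin Phi_Ex.
  rewrite (@E_ext _ (fun l => 1 * (\sum_(j < k) (Phi (A j) l * px l)) + (-1) * px l)); last by move=> l; ring.
  rewrite E_lin E_sum Epx.
  under eq_bigr do rewrite Phi_Ex.
  rewrite -mulr_sumr s1; ring.
have hEz : E (fun l => pA A l i * pz l) = tau * e3 (A i).
  rewrite /pA (@E_ext _ (fun l => 1 * (Phi (A i) l * pz l) + (- e0 (A i)) * (\sum_(j < k) (Phi (A j) l * pz l) - pz l))); last first.
    by move=> l; rewrite /pA -mulr_suml; ring.
  rewrite E_lin Phi_Ez.
  rewrite (@E_ext _ (fun l => 1 * (\sum_(j < k) (Phi (A j) l * pz l)) + (-1) * pz l)); last by move=> l; ring.
  rewrite E_lin E_sum Epz.
  under eq_bigr do rewrite Phi_Ez.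
  rewrite -mulr_sumr s3; ring.
rewrite hE hEx hEz; ring.
Qed.


Lemma wt_ge0 n : 0 <= wt n.
Proof. rewrite /wt; case: ifP => _; [|case: ifP => _]; lra. Qed.

Definition wnn (n : nat) : {nonneg R} := NngNum (wt_ge0 n).

Definition muf : set nat -> \bar R := fun A => (\sum_(n < 12) (wt n)%:E * \d_(n : nat) A)%E.

Lemma muE : muf = msum (fun n => mscale (wnn n) \d_(n : nat)) 12.
Proof. by apply/funext => A. Qed.

Let mu0 : muf set0 = 0%E.
Proof. by rewrite muE measure0. Qed.
Let mu_ge0 A : (0 <= muf A)%E.
Proof. by rewrite muE measure_ge0. Qed.
Let mu_sa : semi_sigma_additive muf.
Proof. rewrite muE; exact: measure_semi_sigma_additive. Qed.

HB.instance Definition _ := isMeasure.Build _ _ _ muf mu0 mu_ge0 mu_sa.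

Let mu_setT : muf [set: nat] = 1%E.
Proof.
rewrite /muf.
under eq_bigr do rewrite diracT mule1.
rewrite sumEFin -E1 /E big_mkord.
by congr (_%:E); apply: eq_bigr => n _; rewrite mulr1.
Qed.

HB.instance Definition _ := @Measure_isProbability.Build _ _ R muf mu_setT.

Lemma mfun_nat (g : nat -> R) : measurable_fun setT g.
Proof. by move=> _ Y _. Qed.


Lemma Rint_mu (f : nat -> R) : (forall n, 0 <= f n) ->
  Rintegral muf setT f = E f.
Proof.
move=> f0.
rewrite /Rintegral muE.
rewrite (@ge0_integral_measure_sum _ _ R (fun n => mscale (wnn n) \d_(n : nat)) setT measurableT (fun x => (f x)%:E)); last 2 first.
  by move=> x _; rewrite lee_fin.
  by move=> _ Y _.
have h n : (\int[mscale (wnn n) \d_(n : nat)]_x (f x)%:E = (wt n * f n)%:E)%E.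
  rewrite (@ge0_integral_mscale _ _ R \d_(n : nat) setT measurableT (wnn n) (fun x => (f x)%:E)); last 2 first.
      by move=> _ Y _.
    by move=> x _; rewrite lee_fin.
  rewrite integral_dirac //=.
  by rewrite diracT mul1e -EFinM.
rewrite (eq_bigr (fun n : 'I_12 => (wt n * f n)%:E)); last by move=> n _; exact: h.
rewrite sumEFin /= /E big_mkord //.
Qed.

End S.

Local Open Scope complex_scope.
Theorem proposition1 (R : realType) :
  exists W : 'M[complex R]_(2 * 2), bqs W /\
  exists (d : measure_display) (T : measurableType d)
         (omega : probability T R) (pA pB : response R T 2),
    valid_response pA /\ valid_response pB /\
    forall (k l : nat) (A : 'I_k -> 'M[complex R]_2)
           (B : 'I_l -> 'M[complex R]_2),
      povm A -> povm B ->
      forall (i : 'I_k) (j : 'I_l),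
        \tr (W *m (A i *t B j)) =
        (Rintegral omega setT (fun lam => pA k A lam i * pB l B lam j))%:C.
Proof.
exists (W R); split; first exact: W_bqs.
exists default_measure_display, nat, (muf R : probability nat R), (@pA R), (@pB R).
split.
  move=> k A hA; split.
  - by move=> i _ Y _.
  - by move=> l i; apply/andP; split; [exact: pA_ge0 | exact: pA_le1].
  - by move=> l; exact: pA_sum.
split.
  move=> k B hB; split.
  - by move=> i _ Y _.
  - by move=> l i; apply/andP; split; [exact: pB_ge0 | exact: pB_le1].
  - by move=> l; exact: pB_sum.
move=> k l A B hA hB i j.
have [a1 a2 a3 _] := psd2 (hA.1 i).
have [b1 b2 b3 _] := psd2 (hB.1 j).
rewrite trW // Rint_mu; last first.
  by move=> n; apply: mulr_ge0; [exact: pA_ge0 | exact: pB_ge0].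
rewrite /pB model //.
Qed.
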